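(* Let $\{(x^k,y^k)\}$ be generated by the LSAAL algorithm described in the context, under the standing bounds (D2) and (D3). Then for $k=1,2,\dots$, $$\|x^{k+1}-x^k\|\le\sigma\Big\{[\kappa_f+\nu_g\kappa_g\sigma]+\kappa_g\|y^k\|\Big\}.$$
   Context: $\mathcal{Y}$ is a finite-dimensional Hilbert space, $\mathcal{K}\subset\mathcal{Y}$ a closed convex cone, $\mathcal{K}^\circ=\{v:\langle v,w\rangle\le0\ \forall w\in\mathcal{K}\}$ its polar cone, $\Pi_{\mathcal{K}^\circ}$ the metric projection onto $\mathcal{K}^\circ$. $X\subset\mathbb{R}^n$ is a nonempty convex compact set contained in an open convex set $\mathcal{O}$. $\xi$ is a random vector supported on $\Xi\subseteq\mathbb{R}^q$; $F:\mathcal{O}\times\Xi\to\mathbb{R}$, $G:\mathcal{O}\times\Xi\to\mathcal{Y}$ are, for every $\xi$, smooth in $x$, with gradient $\nabla_xF(x,\xi)$ and derivative $\mathrm{D}_xG(x,\xi)$. Samples $\xi_1,\xi_2,\dots$ of $\xi$ are given. (D2) There is $\nu_g>0$ with $\|G(x,\xi)\|\le\nu_g$ for all $x\in\mathcal{O}$ and all $\xi$. (D3) There are $\kappa_f,\kappa_g>0$ with $\|\nabla_xF(x,\xi)\|\le\kappa_f$ and $\|\mathrm{D}_xG(x,\xi)\|\le\kappa_g$ (operator norm) for all $x\in\mathcal{O}$ and all $\xi$. LSAAL algorithm: choose $x^1\in X$, $y^1=0$, $\sigma>0$. For $k=1,2,\dots$: $l_f^k(x)=F(x^k,\xi_k)+\langle\nabla_xF(x^k,\xi_k),x-x^k\rangle$,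 $l_g^k(x)=G(x^k,\xi_k)+\mathrm{D}_xG(x^k,\xi_k)(x-x^k)$, $l_\sigma^k(x,y)=l_f^k(x)+\frac{1}{2\sigma}[\|\Pi_{\mathcal{K}^\circ}(y+\sigma l_g^k(x))\|^2-\|y\|^2]$, $x^{k+1}=\mathrm{argmin}_{x\in X}\{l_\sigma^k(x,y^k)+\frac{1}{2\sigma}\|x-x^k\|^2\}$, $y^{k+1}=\Pi_{\mathcal{K}^\circ}(y^k+\sigma l_g^k(x^{k+1}))$. *)

(* Defs.v *)
From HB Require Import structures.
From mathcomp Require Import all_boot all_order all_algebra.
From mathcomp Require Import all_classical all_reals all_analysis.
Set Implicit Arguments. Unset Strict Implicit. Unset Printing Implicit Defensive.
Import Order.TTheory GRing.Theory Num.Theory.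
Import numFieldNormedType.Exports.
Local Open Scope classical_set_scope.
Local Open Scope ring_scope.

Definition dotv (R : realType) (n : nat) (u v : 'rV[R]_n) : R :=
  \sum_(i < n) u ord0 i * v ord0 i.

Definition enorm (R : realType) (n : nat) (u : 'rV[R]_n) : R :=
  Num.sqrt (dotv u u).

Definition closed_convex_cone (R : realType) (m : nat) (K : set 'rV[R]_m) : Prop :=
  [/\ K 0, (forall t w, 0 <= t -> K w -> K (t *: w)),
      (forall u v, K u -> K v -> K (u + v)) & closed K].

Definition polar_cone (R : realType) (m : nat) (K : set 'rV[R]_m) : set 'rV[R]_m :=
  [set v | forall w, K w -> dotv v w <= 0].

Definition is_metric_proj (R : realType) (m : nat) (C : set 'rV[R]_m)
  (v p : 'rV[R]_m) : Prop :=
  C p /\ forall w, C w -> enorm (v - p) <= enorm (v - w).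

Definition opnorm_le (R : realType) (n m : nat) (A : 'M[R]_(n, m)) (c : R) : Prop :=
  forall h : 'rV[R]_n, enorm (h *m A) <= c * enorm h.

Definition lin_f (R : realType) (n q : nat)
  (F : 'rV[R]_n -> 'rV[R]_q -> R) (gradF : 'rV[R]_n -> 'rV[R]_q -> 'rV[R]_n)
  (xk : 'rV[R]_n) (s : 'rV[R]_q) (z : 'rV[R]_n) : R :=
  F xk s + dotv (gradF xk s) (z - xk).

Definition lin_g (R : realType) (n m q : nat)
  (G : 'rV[R]_n -> 'rV[R]_q -> 'rV[R]_m) (DG : 'rV[R]_n -> 'rV[R]_q -> 'M[R]_(n, m))
  (xk : 'rV[R]_n) (s : 'rV[R]_q) (z : 'rV[R]_n) : 'rV[R]_m :=
  G xk s + (z - xk) *m DG xk s.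

Definition lin_aug_lag (R : realType) (n m q : nat) (sigma : R)
  (Pi : 'rV[R]_m -> 'rV[R]_m)
  (F : 'rV[R]_n -> 'rV[R]_q -> R) (gradF : 'rV[R]_n -> 'rV[R]_q -> 'rV[R]_n)
  (G : 'rV[R]_n -> 'rV[R]_q -> 'rV[R]_m) (DG : 'rV[R]_n -> 'rV[R]_q -> 'M[R]_(n, m))
  (xk : 'rV[R]_n) (s : 'rV[R]_q) (z : 'rV[R]_n) (y : 'rV[R]_m) : R :=
  lin_f F gradF xk s z
  + (2 * sigma)^-1 * (enorm (Pi (y + sigma *: lin_g G DG xk s z)) ^+ 2 - enorm y ^+ 2).

Definition LSAAL_iterates (R : realType) (n m q : nat) (sigma : R)
  (X : set 'rV[R]_n) (Pi : 'rV[R]_m -> 'rV[R]_m)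
  (F : 'rV[R]_n -> 'rV[R]_q -> R) (gradF : 'rV[R]_n -> 'rV[R]_q -> 'rV[R]_n)
  (G : 'rV[R]_n -> 'rV[R]_q -> 'rV[R]_m) (DG : 'rV[R]_n -> 'rV[R]_q -> 'M[R]_(n, m))
  (xi : nat -> 'rV[R]_q) (x : nat -> 'rV[R]_n) (y : nat -> 'rV[R]_m) : Prop :=
  [/\ X (x 1%N), y 1%N = 0 &
    forall k : nat, (1 <= k)%N ->
      [/\ X (x k.+1),
          (forall z, X z ->
             lin_aug_lag sigma Pi F gradF G DG (x k) (xi k) (x k.+1) (y k)
               + (2 * sigma)^-1 * enorm (x k.+1 - x k) ^+ 2
             <= lin_aug_lag sigma Pi F gradF G DG (x k) (xi k) z (y k)
               + (2 * sigma)^-1 * enorm (z - x k) ^+ 2)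
        & y k.+1 = Pi (y k + sigma *: lin_g G DG (x k) (xi k) (x k.+1))]].

(* Main.v *)
Require Import Defs.
From HB Require Import structures.
From mathcomp Require Import all_boot all_order all_algebra.
From mathcomp Require Import all_classical all_reals all_analysis.
From mathcomp Require Import ring lra.
Import Order.TTheory GRing.Theory Num.Theory.
Import numFieldNormedType.Exports.
Local Open Scope classical_set_scope.
Local Open Scope ring_scope.
Set Implicit Arguments. Unset Strict Implicit. Unset Printing Implicit Defensive.

Lemma convX (R : realType) n (X : set 'rV[R]_n) a b (t : R) :
  convex_set X -> X a -> X b -> 0 <= t -> t <= 1 -> X (t *: a + (1 - t) *: b).
Proof.
move=> cX Xa Xb t0 t1.
have := cX a b (Itv01 t0 t1).
by rewrite !inE => /(_ Xa Xb).
Qed.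

Section Dot.
Variables (R : realType) (n : nat).
Implicit Types u v w : 'rV[R]_n.

Lemma dotvC u v : dotv u v = dotv v u.
Proof. by apply: eq_bigr => i _; rewrite mulrC. Qed.

Lemma dotvDl u v w : dotv (u + v) w = dotv u w + dotv v w.
Proof. by rewrite /dotv -big_split; apply: eq_bigr => i _; rewrite mxE mulrDl. Qed.

Lemma dotvZl a u v : dotv (a *: u) v = a * dotv u v.
Proof. by rewrite /dotv mulr_sumr; apply: eq_bigr => i _; rewrite mxE mulrA. Qed.

Lemma dotvNl u v : dotv (- u) v = - dotv u v.
Proof. by rewrite -scaleN1r dotvZl mulN1r. Qed.

Lemma dotvBl u v w : dotv (u - v) w = dotv u w - dotv v w.
Proof. by rewrite dotvDl dotvNl. Qed.

Lemma dotvDr u v w : dotv w (u + v) = dotv w u + dotv w v.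
Proof. by rewrite dotvC dotvDl !(dotvC w). Qed.

Lemma dotvZr a u v : dotv v (a *: u) = a * dotv v u.
Proof. by rewrite dotvC dotvZl dotvC. Qed.

Lemma dotvBr u v w : dotv w (u - v) = dotv w u - dotv w v.
Proof. by rewrite dotvC dotvBl !(dotvC w). Qed.

Lemma dotv0l v : dotv 0 v = 0.
Proof. by rewrite -(scale0r 0) dotvZl mul0r. Qed.

Lemma dotv_ge0 u : 0 <= dotv u u.
Proof. by apply: sumr_ge0 => i _; rewrite -expr2 sqr_ge0. Qed.

Lemma enorm_ge0 u : 0 <= enorm u.
Proof. exact: sqrtr_ge0. Qed.

Lemma enorm_sq u : enorm u ^+ 2 = dotv u u.
Proof. by rewrite /enorm sqr_sqrtr // dotv_ge0. Qed.

Lemma dotv_eq0 u v : dotv u u = 0 -> dotv u v = 0.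
Proof.
move=> /eqP; rewrite psumr_eq0 => [/allP H|i _]; last by rewrite -expr2 sqr_ge0.
apply: big1 => i _.
have /implyP := H i (mem_index_enum _); rewrite -expr2 sqrf_eq0 => /(_ isT) /eqP ->.
by rewrite mul0r.
Qed.

Lemma CS u v : dotv u v <= enorm u * enorm v.
Proof.
have [a0|apos] := eqVneq (enorm u) 0.
  have : dotv u u = 0 by rewrite -enorm_sq a0 expr0n.
  by move=> /dotv_eq0 ->; rewrite a0 mul0r.
have [b0|bpos] := eqVneq (enorm v) 0.
  have : dotv v v = 0 by rewrite -enorm_sq b0 expr0n.
  by move=> /dotv_eq0; rewrite dotvC => ->; rewrite b0 mulr0.
have ha : 0 < enorm u by rewrite lt_neqAle eq_sym apos enorm_ge0.
have hb : 0 < enorm v by rewrite lt_neqAle eq_sym bpos enorm_ge0.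
have := dotv_ge0 (enorm v *: u - enorm u *: v).
rewrite !(dotvBl, dotvBr, dotvZl, dotvZr) -!enorm_sq (dotvC v u).
set a := enorm u; set b := enorm v; set c := dotv u v => H.
have hab : 0 < a * b by rewrite mulr_gt0.
have : 0 <= (a * b) * (a * b - c) by nra.
by rewrite pmulr_rge0 // subr_ge0.
Qed.

Lemma enorm_triangle u v : enorm (u + v) <= enorm u + enorm v.
Proof.
rewrite -(ler_pXn2r (_ : (0 < 2)%N)) ?nnegrE ?addr_ge0 ?enorm_ge0 //.
rewrite enorm_sq dotvDl !dotvDr (dotvC v u) sqrrD -!enorm_sq.
have := CS u v; lra.
Qed.

Lemma enormZ a u : enorm (a *: u) = `|a| * enorm u.
Proof.
rewrite /enorm dotvZl dotvZr mulrA sqrtrM; last by rewrite -expr2 sqr_ge0.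
by rewrite -expr2 sqrtr_sqr.
Qed.

Lemma enormN u : enorm (- u) = enorm u.
Proof. by rewrite -scaleN1r enormZ normrN normr1 mul1r. Qed.

Lemma absCS u v : `|dotv u v| <= enorm u * enorm v.
Proof.
rewrite ler_norml CS andbT.
have := CS (- u) v; rewrite dotvNl enormN => H.
by rewrite lerNl.
Qed.
End Dot.

Section Proj.
Variables (R : realType) (m : nat) (K : set 'rV[R]_m) (Pi : 'rV[R]_m -> 'rV[R]_m).
Hypothesis HPi : forall v, is_metric_proj (polar_cone K) v (Pi v).

Lemma sq_le (u v : 'rV[R]_m) : enorm u <= enorm v -> dotv u u <= dotv v v.
Proof.
move=> h; rewrite -!enorm_sq.
by rewrite (ler_pXn2r (_ : (0 < 2)%N)) ?nnegrE ?enorm_ge0.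
Qed.

Lemma proj_cone w : polar_cone K (Pi w).
Proof. by case: (HPi w). Qed.

Lemma polar_scale p t : polar_cone K p -> 0 <= t -> polar_cone K (t *: p).
Proof.
move=> hp t0 z Kz; rewrite dotvZl.
by apply: mulr_ge0_le0 => //; apply: hp.
Qed.

Lemma proj_le w u : polar_cone K u -> dotv (w - Pi w) (w - Pi w) <= dotv (w - u) (w - u).
Proof. by move=> hu; apply: sq_le; case: (HPi w) => _; apply. Qed.

Lemma proj_orth w : dotv (Pi w) w = dotv (Pi w) (Pi w).
Proof.
set p := Pi w.
have key (t : R) : 0 <= t -> dotv (w - p) (w - p) <= dotv (w - t *: p) (w - t *: p).
  by move=> t0; apply: proj_le; apply: polar_scale => //; apply: proj_cone.
have E (t : R) : dotv (w - t *: p) (w - t *: p) =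
    dotv w w - 2 * t * dotv p w + t ^+ 2 * dotv p p.
  rewrite !(dotvBl, dotvBr, dotvZl, dotvZr) (dotvC w p).
  move: (dotv w w) (dotv p w) (dotv p p) => A B C; ring.
have E1 : dotv (w - p) (w - p) = dotv w w - 2 * dotv p w + dotv p p.
  by rewrite -[in LHS](scale1r p) E; ring.
have h0 := key 0 (lexx 0); rewrite E E1 in h0.
have bge := dotv_ge0 p.
have [b0|bpos] := eqVneq (dotv p p) 0.
  by rewrite b0 dotv_eq0.
have bgt : 0 < dotv p p by rewrite lt_neqAle eq_sym bpos bge.
set a := dotv p w in h0 *; set b := dotv p p in bge bgt h0 *.
have a0 : 0 <= a by nra.
have ht : (a / b) * b = a by rewrite divfK // gt_eqF.
have := key (a / b) (divr_ge0 a0 bge); rewrite E E1 -/a -/b => h.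
have hh : (a - b) ^+ 2 <= 0 by nra.
have : (a - b) ^+ 2 == 0 by rewrite eq_le hh sqr_ge0.
by rewrite sqrf_eq0 subr_eq0 => /eqP.
Qed.

Lemma proj_ineq w u : polar_cone K u ->
  2 * dotv u w - dotv u u <= dotv (Pi w) (Pi w).
Proof.
move=> hu; have := proj_le w hu.
rewrite !(dotvBl, dotvBr) (dotvC w (Pi w)) (dotvC w u) proj_orth.
lra.
Qed.

Lemma proj_grad w w0 : dotv (Pi w0) (Pi w0) + 2 * dotv (Pi w0) (w - w0)
   <= dotv (Pi w) (Pi w).
Proof.
have := proj_ineq w (proj_cone w0).
rewrite dotvBr proj_orth; lra.
Qed.

Lemma proj_convex w0 w1 t : 0 <= t -> t <= 1 ->
  dotv (Pi (t *: w0 + (1 - t) *: w1)) (Pi (t *: w0 + (1 - t) *: w1))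
  <= t * dotv (Pi w0) (Pi w0) + (1 - t) * dotv (Pi w1) (Pi w1).
Proof.
move=> t0 t1; set wt := _ + _.
have h := proj_orth wt.
have h0 := proj_ineq w0 (proj_cone wt).
have h1 := proj_ineq w1 (proj_cone wt).
have e : dotv (Pi wt) wt = t * dotv (Pi wt) w0 + (1 - t) * dotv (Pi wt) w1.
  by rewrite /wt dotvDr !dotvZr.
have t1' : 0 <= 1 - t by lra.
nra.
Qed.

Lemma proj_norm w : enorm (Pi w) <= enorm w.
Proof.
have h := CS (Pi w) w; rewrite proj_orth -enorm_sq in h.
have [z|nz] := eqVneq (enorm (Pi w)) 0; first by rewrite z enorm_ge0.
have pos : 0 < enorm (Pi w) by rewrite lt_neqAle eq_sym nz enorm_ge0.
by rewrite expr2 ler_pM2l in h.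
Qed.
End Proj.

Lemma limit_lemma (R : realType) (A B : R) : 0 <= B ->
  (forall t, 0 < t -> t <= 1 -> A <= B * (t - 2)) -> A <= - 2 * B.
Proof.
move=> B0 H; rewrite leNgt; apply/negP => hA.
set e := A + 2 * B.
have e0 : 0 < e by rewrite /e; lra.
have eB : 0 < e + B by lra.
set t := e / (e + B).
have ht : t * (e + B) = e by rewrite divfK // gt_eqF.
have t0 : 0 < t by rewrite divr_gt0.
have t1 : t <= 1 by rewrite ler_pdivrMr // mul1r; lra.
have h := H t t0 t1.
have h2 : e <= B * t by rewrite /e; lra.
have : e * (e + B) <= B * t * (e + B) by rewrite ler_pM2r.
rewrite -mulrA ht; nra.
Qed.

Unset Implicit Arguments.

Theorem corollary3p1 (R : realType) (n m q : nat)
  (K : set 'rV[R]_m) (Pi : 'rV[R]_m -> 'rV[R]_m)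
  (X O : set 'rV[R]_n) (Xi : set 'rV[R]_q)
  (F : 'rV[R]_n -> 'rV[R]_q -> R) (gradF : 'rV[R]_n -> 'rV[R]_q -> 'rV[R]_n)
  (G : 'rV[R]_n -> 'rV[R]_q -> 'rV[R]_m) (DG : 'rV[R]_n -> 'rV[R]_q -> 'M[R]_(n, m))
  (xi : nat -> 'rV[R]_q) (sigma nu_g kappa_f kappa_g : R)
  (x : nat -> 'rV[R]_n) (y : nat -> 'rV[R]_m) :
  closed_convex_cone K ->
  (forall v, is_metric_proj (polar_cone K) v (Pi v)) ->
  X !=set0 -> convex_set X -> compact X ->
  open O -> convex_set O -> X `<=` O ->
  (forall s, Xi s -> forall z, O z ->
     differentiable (fun w => F w s) z /\
     'd (fun w => F w s) z = (fun h => dotv (gradF z s) h) :> ('rV[R]_n -> R)) ->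
  (forall s, Xi s -> forall z, O z ->
     differentiable (fun w => G w s) z /\
     'd (fun w => G w s) z = (fun h => h *m DG z s) :> ('rV[R]_n -> 'rV[R]_m)) ->
  (forall s, Xi s -> {in O, continuous (fun w => gradF w s)}) ->
  (forall s, Xi s -> {in O, continuous (fun w => DG w s)}) ->
  (forall k, Xi (xi k)) ->
  0 < sigma ->
  0 < nu_g -> (forall s, Xi s -> forall z, O z -> enorm (G z s) <= nu_g) ->
  0 < kappa_f -> 0 < kappa_g ->
  (forall s, Xi s -> forall z, O z ->
     enorm (gradF z s) <= kappa_f /\ opnorm_le (DG z s) kappa_g) ->
  LSAAL_iterates sigma X Pi F gradF G DG xi x y ->
  forall k : nat, (1 <= k)%N ->
    enorm (x k.+1 - x k)
      <= sigma * ((kappa_f + nu_g * kappa_g * sigma) + kappa_g * enorm (y k)).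
Proof.
move=> _ HPi _ cX _ _ _ XO _ _ _ _ Xixi sig0 nu0 Gb kf0 kg0 Db [X1 _ Hit] k k1.
have Xk : X (x k).
  case: k k1 {Hit} (Hit) => // -[|j] _ Hit' //.
  by case: (Hit' j.+1 isT).
have [Xp Hmin _] := Hit k k1.
have [gfb Dop] := Db (xi k) (Xixi k) (x k) (XO _ Xk).
have Gkb := Gb (xi k) (Xixi k) (x k) (XO _ Xk).
move: Xp Hmin gfb Dop Gkb.
set xk := x k; set xp := x k.+1; set s := xi k; set yk := y k.
set gf := gradF xk s; set D := DG xk s; set g := G xk s.
move=> Xp Hmin gfb Dop Gkb.
set d := xp - xk.
set M := d *m D.
set W0 := yk + sigma *: g.
set W1 := yk + sigma *: (g + M).
set c := (2 * sigma)^-1.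
pose H := fun w => dotv (Pi w) (Pi w).
have c0 : 0 < c by rewrite invr_gt0 mulr_gt0.
have c2 : c * (2 * sigma) = 1 by rewrite mulVf // gt_eqF // mulr_gt0.
have LF z : lin_aug_lag sigma Pi F gradF G DG xk s z yk =
   F xk s + dotv gf (z - xk) + c * (H (yk + sigma *: (g + (z - xk) *m D)) - dotv yk yk).
  by rewrite /lin_aug_lag /lin_f /lin_g !enorm_sq.
set a := dotv gf d.
set dd := dotv d d.
have dd0 : 0 <= dd by apply: dotv_ge0.
have step t : 0 < t -> t <= 1 -> a + c * (H W1 - H W0) <= c * dd * (t - 2).
  move=> t0 t1.
  have Xt := convX cX Xk Xp (ltW t0) t1.
  have := Hmin _ Xt; rewrite !LF !enorm_sq.
  have ezt : t *: xk + (1 - t) *: xp - xk = (1 - t) *: d.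
    by apply/rowP => i; rewrite !mxE; ring.
  rewrite ezt -scalemxAl -/d -/M -/W1 dotvZr dotvZl dotvZr.
  have eW : yk + sigma *: (g + (1 - t) *: M) = t *: W0 + (1 - t) *: W1.
    by apply/rowP => i; rewrite !mxE; ring.
  rewrite eW.
  have hc := proj_convex HPi W0 W1 (ltW t0) t1.
  rewrite -/(H _) -/(H W0) -/(H W1) in hc.
  move=> hm.
  have : t * (a + c * (H W1 - H W0)) <= t * (c * dd * (t - 2)).
    rewrite -/c -/a -/dd in hm.
    have hc' := ler_wpM2l (ltW c0) hc.
    lra.
  by rewrite ler_pM2l.
have lim := limit_lemma (mulr_ge0 (ltW c0) dd0) (fun t t0 t1 => step t t0 t1).
have hg := proj_grad HPi W1 W0.
have eW : W1 - W0 = sigma *: M by apply/rowP => i; rewrite !mxE; ring.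
rewrite eW dotvZr -/(H W0) -/(H W1) in hg.
set pm := dotv (Pi W0) M in hg.
have main : sigma * a + sigma * pm <= - dd.
  have hg' := ler_wpM2l (ltW c0) hg.
  have e : c * (H W0 + 2 * (sigma * pm)) = c * H W0 + pm.
    transitivity (c * H W0 + (c * (2 * sigma)) * pm); first by ring.
    by rewrite c2 mul1r.
  rewrite e in hg'.
  have : a + pm <= - 2 * (c * dd) by lra.
  move=> h; have := ler_wpM2l (ltW sig0) h.
  have -> : sigma * (- 2 * (c * dd)) = - dd.
    transitivity (- ((c * (2 * sigma)) * dd)); first by ring.
    by rewrite c2 mul1r.
  by rewrite mulrDr.
set N := enorm d.
have Ndd : dd = N ^+ 2 by rewrite enorm_sq.
have N0 : 0 <= N := enorm_ge0 d.
have ha : - a <= kappa_f * N.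
  have := absCS gf d; rewrite -/a => h1.
  have h2 : - a <= `|a| by rewrite -normrN ler_norm.
  apply: (le_trans h2); apply: (le_trans h1).
  by rewrite ler_wpM2r.
set P := enorm (Pi W0).
have P0 : 0 <= P := enorm_ge0 _.
have hP : P <= enorm yk + sigma * nu_g.
  apply: (le_trans (proj_norm HPi W0)).
  apply: (le_trans (enorm_triangle _ _)).
  rewrite enormZ ger0_norm ?(ltW sig0) // lerD2l.
  by rewrite ler_wpM2l // ltW.
have hM : enorm M <= kappa_g * N by apply: Dop.
have hpm : - pm <= P * (kappa_g * N).
  have := absCS (Pi W0) M; rewrite -/pm -/P => h1.
  have h2 : - pm <= `|pm| by rewrite -normrN ler_norm.
  apply: (le_trans h2); apply: (le_trans h1).
  by rewrite ler_wpM2l.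
have hP2 : P * (kappa_g * N) <= (enorm yk + sigma * nu_g) * (kappa_g * N).
  by rewrite ler_wpM2r // mulr_ge0 // ltW.
set Q := sigma * (kappa_f + nu_g * kappa_g * sigma + kappa_g * enorm yk).
have hQ : N ^+ 2 <= N * Q.
  rewrite -Ndd /Q.
  have hs := ler_wpM2l (ltW sig0) ha.
  have hs2 := ler_wpM2l (ltW sig0) (le_trans hpm hP2).
  nra.
have Q0 : 0 <= Q.
  rewrite /Q; apply: mulr_ge0; first exact: ltW.
  have p1 : 0 <= nu_g * kappa_g * sigma by rewrite !mulr_ge0 // ltW.
  have p2 : 0 <= kappa_g * enorm yk by rewrite mulr_ge0 ?enorm_ge0 // ltW.
  lra.
rewrite -/Q.
nra.
Qed.
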